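(* Let $G$ be a connected threshold graph of order $n\ge 4$ and size $m$ with $n-1<m<\binom{n}{2}$, with $c$ type 1 vertices, backwards zero position sequence $(b_1,\ldots,b_z)$, $F_1=\sum_{i=1}^z b_i^2$, and lazy walk counts $\mathrm{LW}_k$ as in the context. Define $(\mathrm{LW}''_k)_{k\in\mathbb{N}_0}$ by $\mathrm{LW}''_0=1$ and \[\mathrm{LW}''_k=c\,\mathrm{LW}''_{k-1}+\sum_{r=0}^{k-3}\mathrm{LW}''_r\sum_{q\in\mathbb{N}_0}\binom{k-3-r-q}{q}F_1\Big(\sum_{i=1}^z b_i\Big)^q\qquad(k\in\mathbb{N}).\] Then $\mathrm{LW}''_k\ge \mathrm{LW}_k$ for every $k\in\mathbb{N}_0$.
   Context: A threshold graph is a simple graph whose vertices can be ordered $v_1,\ldots,v_n$ so that for each $2\le i\le n$, $v_i$ is either adjacent to all of $v_1,\ldots,v_{i-1}$ (then $a_i=1$) or to none of them (then $a_i=0$); by convention $a_1=1$. Vertex $v_i$ is of type 1 if $a_i=1$ and of type 0 if $a_i=0$; $c$ and $z$ are the numbers of type 1 and type 0 vertices. The backwards zero position sequence $(b_1,\ldots,b_z)$ is defined by letting $b_i$ be the number of type 1 vertices appearing after the $i$-th type 0 vertex in the order $v_1,\ldots,v_n$. A lazy walk of length $k\in\mathbb{N}_0$ is a sequence $u_0u_1\cdots u_k$ of vertices such that for each $1\le i\le k$, $u_i=u_{i-1}$ or $u_i$ is adjacent to $u_{i-1}$. For $k\in\mathbb{N}$, $\mathrm{LW}_k$ is the number of lazy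 walks of length $k-1$ in $G$ whose first and last vertices are both type 1 vertices, and $\mathrm{LW}_0=1$. Binomial coefficients $\binom{a}{q}$ with integer $a$ and $q\in\mathbb{N}_0$ are taken to be $0$ whenever $a<q$. *)

(* Defs.v *)
From mathcomp Require Import all_boot.
Set Implicit Arguments. Unset Strict Implicit. Unset Printing Implicit Defensive.

(* A threshold graph on vertices 'I_n = v_1..v_n (0-indexed here), given by
   its creation sequence a : v_i is adjacent to all earlier vertices iff a i. *)
Definition tadj (n : nat) (a : 'I_n -> bool) : rel 'I_n :=
  fun i j => ((i < j) && a j) || ((j < i) && a i).

Definition tconnected (n : nat) (a : 'I_n -> bool) : Prop :=
  forall x y : 'I_n, connect (tadj a) x y.

Definition gsize (n : nat) (a : 'I_n -> bool) : nat :=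
  #|[set p : 'I_n * 'I_n | (p.1 < p.2) && tadj a p.1 p.2]|.

(* c = number of type 1 vertices *)
Definition ccount (n : nat) (a : 'I_n -> bool) : nat := #|[set i : 'I_n | a i]|.

(* for a type 0 vertex i, number of type 1 vertices after it (its b-value) *)
Definition bval (n : nat) (a : 'I_n -> bool) (i : 'I_n) : nat :=
  #|[set j : 'I_n | (i < j) && a j]|.

Definition F1 (n : nat) (a : 'I_n -> bool) : nat := \sum_(i < n | ~~ a i) bval a i ^ 2.
Definition sumb (n : nat) (a : 'I_n -> bool) : nat := \sum_(i < n | ~~ a i) bval a i.

Definition lazyrel (n : nat) (a : 'I_n -> bool) : rel 'I_n :=
  fun u v => (u == v) || tadj a u v.

(* LW_0 = 1; LW_{k+1} = number of lazy walks u_0 ... u_k (a k+1 tuple of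
   vertices) whose first and last vertices are of type 1. *)
Definition LW (n : nat) (a : 'I_n -> bool) (k : nat) : nat :=
  match k with
  | 0 => 1
  | k'.+1 => #|[set t : k'.+1.-tuple 'I_n |
                 [&& path (lazyrel a) (thead t) (behead t),
                     a (thead t) & a (last (thead t) (behead t))]]|
  end.

(* Main.v *)
Require Import Defs.
From mathcomp Require Import all_boot zify.
Set Implicit Arguments. Unset Strict Implicit. Unset Printing Implicit Defensive.

Lemma sum_tupleS (T : finType) m (F : m.+1.-tuple T -> nat) :
  \sum_(t : m.+1.-tuple T) F t = \sum_(x : T) \sum_(t : m.-tuple T) F [tuple of x :: t].
Proof.
rewrite pair_big /=.
rewrite (reindex (fun p : T * m.-tuple T => [tuple of p.1 :: p.2])) //=.
exists (fun t : m.+1.-tuple T => (thead t, [tuple of behead t])) => [[x t] _|t _] /=.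
  by congr pair; apply: val_inj.
by apply: val_inj => /=; rewrite [in RHS](tuple_eta t).
Qed.

Fixpoint fw (n : nat) (a : 'I_n -> bool) (m : nat) (u : 'I_n) : nat :=
  match m with
  | 0 => a u
  | m'.+1 => \sum_(v | lazyrel a u v) fw a m' v
  end.

Lemma cnt (n : nat) (a : 'I_n -> bool) m (u : 'I_n) :
  \sum_(t : m.+1.-tuple 'I_n)
     [&& thead t == u, path (lazyrel a) u (behead t) & a (last u (behead t))] = fw a m u.
Proof.
elim: m u => [|m IH] u.
  rewrite sum_tupleS (bigD1 u) //= [X in _ + X]big1 => [|x /negbTE xu]; last first.
    by apply: big1 => t; rewrite theadE xu.
  rewrite addn0 (big_pred1 [tuple]) /=; last by move=> t; rewrite [t]tuple0 /= eqxx.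
  by rewrite theadE eqxx.
rewrite sum_tupleS (bigD1 u) //= [X in _ + X]big1 => [|x /negbTE xu]; last first.
  by apply: big1 => t; rewrite theadE xu.
rewrite addn0 /=.
under eq_bigr => t _ do rewrite theadE eqxx /=.
rewrite sum_tupleS /=.
rewrite (bigID (lazyrel a u)) /= [X in _ + X]big1 ?addn0; last first.
  by move=> v /negbTE vu; apply: big1 => t /=; rewrite vu.
apply: eq_bigr => v uv; rewrite -IH sum_tupleS (bigD1 v) //= [X in _ + X]big1 => [|x /negbTE xv]; last first.
  by apply: big1 => t; rewrite theadE xv.
by rewrite addn0; apply: eq_bigr => t _; rewrite uv theadE eqxx.
Qed.

Lemma LWE (n : nat) (a : 'I_n -> bool) m :
  LW a m.+1 = \sum_(u | a u) fw a m u.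
Proof.
rewrite /LW -sum1dep_card big_mkcond /=.
under [RHS]eq_bigr => u _ do rewrite -cnt.
rewrite exchange_big /=; apply: eq_bigr => t _.
rewrite [RHS]big_mkcond (bigD1 (thead t)) //= [X in _ + X]big1 => [|u /negbTE ut]; last first.
  by case: ifP => // _; rewrite eq_sym ut.
rewrite addn0 eqxx /=.
by case: (a (thead t)); case: (path _ _ _); case: (a (last _ _)).
Qed.
Definition Bw (S t N : nat) := \sum_(0 <= q < N) 'C(t - q, q) * S ^ q.
Definition Tq (S t : nat) := Bw S t t.+1.
Definition Yq (L : nat -> nat) S m := \sum_(0 <= r < m) L r * Tq S (m.-1 - r).

Lemma pascal t q : 'C(t.+1 - q, q.+1) = 'C(t - q, q.+1) + 'C(t - q, q).
Proof.
case: (leqP q t) => h.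
  by rewrite subSn // binS.
have -> : t.+1 - q = 0 by lia.
have -> : t - q = 0 by lia.
rewrite !bin0n; case: q h => //.
Qed.

Lemma Bw_widen S t N : t < N -> Bw S t N = Tq S t.
Proof.
move=> h; rewrite /Tq /Bw (big_cat_nat _ (n := t.+1)) //= [X in _ + X]big1_seq ?addn0 //.
move=> q /andP[_]; rewrite mem_index_iota => /andP[h1 _].
have -> : t - q = 0 by lia.
by rewrite bin0n; case: q h1.
Qed.

Lemma Bw_SS S t N : Bw S t.+2 N.+1 = Bw S t.+1 N.+1 + S * Bw S t N.
Proof.
rewrite /Bw !big_nat_recl // !subn0 !bin0 !expn0 !mul1n -addnA; congr (_ + _).
rewrite big_distrr -big_split /=; apply: eq_bigr => q _.
rewrite !subSS pascal expnS; lia.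
Qed.

Lemma T0 S : Tq S 0 = 1.
Proof. by rewrite /Tq /Bw big_nat1. Qed.

Lemma T1 S : Tq S 1 = 1.
Proof. by rewrite /Tq /Bw !big_nat_recr //= big_nil. Qed.

Lemma TSS S t : Tq S t.+2 = Tq S t.+1 + S * Tq S t.
Proof. by rewrite {1}/Tq Bw_SS !Bw_widen. Qed.

Lemma YSS L S p : Yq L S p.+2 = Yq L S p.+1 + L p.+1 + S * Yq L S p.
Proof.
rewrite /Yq /= !big_nat_recr //= !subnn T0.
have -> : p.+1 - p = 1 by lia.
rewrite T1.
have E : \sum_(0 <= i < p) L i * Tq S (p.+1 - i) =
  \sum_(0 <= i < p) L i * Tq S (p - i) + S * \sum_(0 <= r < p) L r * Tq S (p.-1 - r).
  rewrite big_distrr -big_split /=; apply: eq_big_nat => r /andP[_ h].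
  have -> : p.+1 - r = (p.-1 - r).+2 by lia.
  have -> : p - r = (p.-1 - r).+1 by lia.
  rewrite TSS; lia.
rewrite E; lia.
Qed.

Lemma fw_zero (n : nat) (a : 'I_n -> bool) m (z : 'I_n) : ~~ a z ->
  fw a m.+1 z = fw a m z + \sum_(v : 'I_n | (z < v) && a v) fw a m v.
Proof.
move=> hz /=; rewrite (bigD1 z) /=; last by rewrite /lazyrel eqxx.
congr (_ + _); apply: eq_bigl => v.
rewrite /lazyrel /tadj (negbTE hz) andbF orbF.
case: (z =P v) => [<-|ne] /=; first by rewrite ltnn eqxx.
have -> : (v != z) by apply/eqP => e; apply: ne; rewrite e.
by rewrite andbT.
Qed.

Lemma fw_one (n : nat) (a : 'I_n -> bool) m (u : 'I_n) : a u ->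
  fw a m.+1 u = \sum_(v | a v) fw a m v + \sum_(v : 'I_n | ~~ a v && (v < u)) fw a m v.
Proof.
move=> hu /=; rewrite (bigID a) /=; congr (_ + _); apply: eq_bigl => v.
  rewrite /lazyrel /tadj hu; case av: (a v); rewrite ?andbF //.
  by rewrite !andbT; case: (ltngtP u v) => [| |/val_inj ->]; rewrite ?eqxx ?orbT.
rewrite /lazyrel /tadj hu andbT; case av: (a v); rewrite ?andbF //=.
rewrite andbT; case: (u =P v) => [e|] //=.
by move: av; rewrite -e hu.
Qed.

Definition Pw (n : nat) (a : 'I_n -> bool) m := \sum_(v : 'I_n | a v) fw a m v.

Lemma sum_const_card (n : nat) (P : pred 'I_n) K :
  \sum_(v : 'I_n | P v) K = #|[set v | P v]| * K.
Proof. by rewrite -sum_nat_const; apply: eq_bigl => v; rewrite inE. Qed.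

Lemma exch (n : nat) (a : 'I_n -> bool) (g : 'I_n -> nat) :
  \sum_(u : 'I_n | a u) \sum_(w : 'I_n | ~~ a w && (w < u)) g w =
  \sum_(w : 'I_n | ~~ a w) bval a w * g w.
Proof.
rewrite (exchange_big_dep (fun w => ~~ a w)) /= => [|u w _ /andP[] //].
apply: eq_bigr => w hw; rewrite sum_const_card /bval; congr (_ * _).
by apply: eq_card => u; rewrite !inE hw /= andbC.
Qed.

Lemma fw_one_bound (n : nat) (a : 'I_n -> bool) p Y (u : 'I_n) :
  (forall w, ~~ a w -> fw a p w <= bval a w * Y) -> a u ->
  fw a p.+1 u <= Pw a p + sumb a * Y.
Proof.
move=> hB hu; rewrite fw_one // leq_add2l /sumb big_distrl /=.
apply: (@leq_trans (\sum_(w : 'I_n | ~~ a w && (w < u)) bval a w * Y)).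
  by apply: leq_sum => w /andP[hw _]; apply: hB.
by rewrite [X in _ <= X](bigID (fun w : 'I_n => w < u)) /= leq_addr.
Qed.

Definition Qm (n : nat) (a : 'I_n -> bool) (L : nat -> nat) m :=
  (forall z, ~~ a z -> fw a m z <= bval a z * Yq L (sumb a) m) /\ Pw a m <= L m.+1.


Definition Lrec (n : nat) (a : 'I_n -> bool) (L : nat -> nat) :=
  forall k, 0 < k ->
     L k = ccount a * L k.-1 +
           \sum_(0 <= r < k - 2)
              L r * \sum_(0 <= q < k.+1) 'C(k - 3 - r - q, q) * F1 a * sumb a ^ q.

Lemma Lform (n : nat) (a : 'I_n -> bool) (L : nat -> nat) m : Lrec a L ->
  L m.+2 = ccount a * L m.+1 + F1 a * Yq L (sumb a) m.
Proof.
move=> hL; rewrite hL //=; congr (_ + _).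
have -> : m.+2 - 2 = m by lia.
rewrite /Yq big_distrr; apply: eq_big_nat => r /andP[_ hr].
rewrite /= mulnCA; congr (_ * _).
have -> : m.+2 - 3 - r = m.-1 - r by lia.
rewrite -(@Bw_widen (sumb a) (m.-1 - r) m.+3); last by lia.
rewrite /Bw big_distrr; apply: eq_bigr => q _.
by rewrite mulnAC mulnC.
Qed.

Lemma stepA (n : nat) (a : 'I_n -> bool) (L : nat -> nat) m : Lrec a L ->
  Qm a L m -> Pw a m.+1 <= L m.+2.
Proof.
move=> hL [hB hA]; rewrite (Lform _ hL).
have E : Pw a m.+1 = ccount a * Pw a m + \sum_(w : 'I_n | ~~ a w) bval a w * fw a m w.
  rewrite /Pw (eq_bigr (fun u : 'I_n => Pw a m + \sum_(w : 'I_n | ~~ a w && (w < u)) fw a m w)).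
    by rewrite big_split /= sum_const_card exch.
  by move=> u hu; rewrite fw_one.
rewrite E leq_add // ?leq_mul //.
rewrite /F1 big_distrl /=; apply: leq_sum => w hw.
by rewrite expnS expn1 -mulnA leq_mul2l hB ?orbT.
Qed.

Lemma stepB (n : nat) (a : 'I_n -> bool) (L : nat -> nat) p : Lrec a L ->
  Qm a L p -> Qm a L p.+1 ->
  forall z, ~~ a z -> fw a p.+2 z <= bval a z * Yq L (sumb a) p.+2.
Proof.
move=> hL [hB hA] [hB1 hA1] z hz; rewrite fw_zero // YSS.
apply: (@leq_trans (bval a z * Yq L (sumb a) p.+1 + bval a z * (L p.+1 + sumb a * Yq L (sumb a) p))); last first.
  by rewrite -mulnDr addnA.
apply: leq_add; first exact: hB1.
apply: (@leq_trans (\sum_(v : 'I_n | (z < v) && a v) (Pw a p + sumb a * Yq L (sumb a) p))).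
  by apply: leq_sum => v /andP[_ hv]; apply: fw_one_bound.
by rewrite sum_const_card /bval leq_mul2l leq_add2r hA orbT.
Qed.

Lemma Q0 (n : nat) (a : 'I_n -> bool) (L : nat -> nat) : L 0 = 1 -> Lrec a L -> Qm a L 0.
Proof.
move=> h0 hL; split.
  by move=> z hz /=; rewrite (negbTE hz).
rewrite hL //= h0 muln1 big_geq // addn0 /Pw /ccount -sum1dep_card.
by apply: leq_sum => v hv /=; rewrite hv.
Qed.

Lemma B1 (n : nat) (a : 'I_n -> bool) (L : nat -> nat) : L 0 = 1 ->
  forall z, ~~ a z -> fw a 1 z <= bval a z * Yq L (sumb a) 1.
Proof.
move=> h0 z hz; rewrite fw_zero //= (negbTE hz) add0n /Yq big_nat1 h0 T0 !muln1.
rewrite /bval -sum1dep_card; apply: leq_sum => v /andP[_ ->] //.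
Qed.

Lemma allQ (n : nat) (a : 'I_n -> bool) (L : nat -> nat) : L 0 = 1 -> Lrec a L ->
  forall m, Qm a L m /\ Qm a L m.+1.
Proof.
move=> h0 hL; elim => [|m [q1 q2]].
  have q0 := Q0 h0 hL; split => //; split; first exact: B1.
  exact: stepA.
split => //; split; first exact: stepB.
apply: stepA => //.
Qed.

Theorem lemma5p2 (n : nat) (a : 'I_n -> bool) (L : nat -> nat) :
  4 <= n ->
  (forall i : 'I_n, val i = 0 -> a i) ->
  tconnected a ->
  n.-1 < gsize a < 'C(n, 2) ->
  L 0 = 1 ->
  (forall k, 0 < k ->
     L k = ccount a * L k.-1 +
           \sum_(0 <= r < k - 2)
              L r * \sum_(0 <= q < k.+1) 'C(k - 3 - r - q, q) * F1 a * sumb a ^ q) ->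
  forall k, LW a k <= L k.
Proof.
move=> _ _ _ _ h0 hL [|m]; first by rewrite h0.
rewrite LWE; have [[_ hA] _] := allQ h0 hL m; exact: hA.
Qed.
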